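(* Let $K\subseteq\mathbb{R}^n$ be a bounded star-shaped set with diameter $d$, and let $\sigma>0$. For any $\varepsilon\in(0,1/2)$, $$\mathfrak{M}\gtrsim \varepsilon\sigma^2\wedge d^2,$$ i.e. $\mathfrak{M}\ge a\,(\varepsilon\sigma^2\wedge d^2)$ for some absolute constant $a>0$.
   Context: Model: the unknown mean $\mu$ lies in $K$. The uncorrupted sample is $\tilde X_i=\mu+\xi_i$, $i=1,\dots,N$, with $\xi_i$ i.i.d. copies of $\xi$ whose distribution belongs to $\Xi_{\sigma^2}$, the family of all distributions on $\mathbb{R}^n$ with mean zero and covariance $\Sigma\preceq\sigma^2 I$. An adversary $\mathcal{C}$, which may inspect the whole uncorrupted sample and knows the model and estimator, replaces at most $\varepsilon N$ of the points by arbitrary points; one observes $X=\mathcal{C}(\tilde X)$. The minimax risk is $$\mathfrak{M}=\inf_{\hat\mu}\sup_{\mu\in K}\sup_{\xi\in\Xi_{\sigma^2}}\sup_{\mathcal{C}}\mathbb{E}_\mu\|\hat\mu(\mathcal{C}(\tilde X))-\mu\|^2.$$ Star-shaped: there is $k^*\in K$ with $(1-t)k^*+tk\in K$ for all $k\in K$, $t\in[0,1]$. Diameter $d=\sup_{x,y\in K}\|x-y\|$; $a\wedge b=\min(a,b)$. *)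

(* Defs.v *)
From HB Require Import structures.
From mathcomp Require Import all_boot all_order all_algebra.
From mathcomp Require Import all_classical all_reals all_analysis.
Set Implicit Arguments. Unset Strict Implicit. Unset Printing Implicit Defensive.
Import Order.TTheory GRing.Theory Num.Theory.
Local Open Scope classical_set_scope.
Local Open Scope ring_scope.

(* R^n is represented by n.-tuple R, which MathComp-Analysis equips with the
   product (= Borel) sigma-algebra of the coordinates. *)
Section Defs.
Variable R : realType.

Definition vadd (n : nat) (x y : n.-tuple R) : n.-tuple R :=
  [tuple tnth x j + tnth y j | j < n].
Definition vsub (n : nat) (x y : n.-tuple R) : n.-tuple R :=
  [tuple tnth x j - tnth y j | j < n].
Definition sqnorm (n : nat) (x : n.-tuple R) : R := \sum_(j < n) tnth x j ^+ 2.
Definition enorm (n : nat) (x : n.-tuple R) : R := Num.sqrt (sqnorm x).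
Definition rowv (n : nat) (x : n.-tuple R) : 'rV[R]_n := \row_j tnth x j.

Definition bounded_tset (n : nat) (K : set (n.-tuple R)) : Prop :=
  exists M : R, forall x, K x -> enorm x <= M.

Definition star_shaped_tset (n : nat) (K : set (n.-tuple R)) : Prop :=
  exists kstar, K kstar /\
    forall k t, K k -> 0 <= t <= 1 ->
      K (vadd [tuple (1 - t) * tnth kstar j | j < n] [tuple t * tnth k j | j < n]).

Definition tdiam (n : nat) (K : set (n.-tuple R)) : R :=
  sup [set r | exists x y, K x /\ K y /\ r = enorm (vsub x y)].

Definition mean_vec (n : nat) (Q : probability (n.-tuple R) R) : 'rV[R]_n :=
  \row_j fine (\int[Q]_x (tnth x j)%:E).
Definition cov_mx (n : nat) (Q : probability (n.-tuple R) R) : 'M[R]_n :=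
  \matrix_(j, k) fine (\int[Q]_x
     ((tnth x j - mean_vec Q 0 j) * (tnth x k - mean_vec Q 0 k))%:E).

Definition Xi_class (n : nat) (s2 : R) (Q : probability (n.-tuple R) R) : Prop :=
  (forall j : 'I_n, Q.-integrable setT (fun x => (tnth x j)%:E)) /\
  (forall j : 'I_n, Q.-integrable setT (fun x => (tnth x j ^+ 2)%:E)) /\
  mean_vec Q = 0 /\
  (forall u : 'rV[R]_n,
     (u *m cov_mx Q *m u^T) 0 0 <= (u *m (s2%:M) *m u^T) 0 0).

Definition adversary (n N : nat) (eps : R)
  (C : N.-tuple (n.-tuple R) -> N.-tuple (n.-tuple R)) : Prop :=
  forall x, (#|[set i : 'I_N | tnth (C x) i != tnth x i]|)%:R <= eps * N%:R.

(* the risks E_mu ||muhat(C(Xtilde)) - mu||^2 obtainable against estimator muhat: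
   mu in K, xi with law in Xi_{sigma^2}, Xtilde_i = mu + xi_i with xi_1..xi_N
   i.i.d. copies of xi (realised on some probability space), C an adversary *)
Definition attainable_risks (n N : nat) (K : set (n.-tuple R)) (s2 eps : R)
  (muhat : N.-tuple (n.-tuple R) -> n.-tuple R) : set (\bar R) :=
  [set r | exists mu, K mu /\
     exists (d : measure_display) (Omega : measurableType d)
            (P : probability Omega R) (xi : 'I_N -> Omega -> n.-tuple R)
            (Q : probability (n.-tuple R) R),
       Xi_class s2 Q /\
       (forall i, measurable_fun setT (xi i)) /\
       (forall i B, measurable B -> P (xi i @^-1` B) = Q B) /\
       (forall B : 'I_N -> set (n.-tuple R), (forall i, measurable (B i)) ->
          P (\bigcap_(i in [set: 'I_N]) (xi i @^-1` B i)) =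
          (\big[*%E/1%E]_(i < N) P (xi i @^-1` B i))%E) /\
       exists C, adversary eps C /\
         r = (\int[P]_w
               (sqnorm (vsub (muhat (C [tuple vadd mu (xi i w) | i < N])) mu))%:E)%E].

Definition worst_risk (n N : nat) (K : set (n.-tuple R)) (s2 eps : R)
  (muhat : N.-tuple (n.-tuple R) -> n.-tuple R) : \bar R :=
  ereal_sup (attainable_risks K s2 eps muhat).

Definition minimax_risk (n N : nat) (K : set (n.-tuple R)) (s2 eps : R) : \bar R :=
  ereal_inf [set worst_risk K s2 eps muhat |
               muhat in [set f : N.-tuple (n.-tuple R) -> n.-tuple R |
                          measurable_fun setT f]].

End Defs.

(* Main.v *)
Require Import Defs.
From HB Require Import structures.
From mathcomp Require Import all_boot all_order all_algebra.
From mathcomp Require Import all_classical all_reals all_analysis.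
From mathcomp Require Import measurable_realfun ring lra.
Import Order.TTheory GRing.Theory Num.Theory.
Local Open Scope classical_set_scope.
Local Open Scope ring_scope.
Set Implicit Arguments. Unset Strict Implicit. Unset Printing Implicit Defensive.

Definition Om (N : nat) : Type := {ffun 'I_N -> bool}.
HB.instance Definition _ N := Finite.on (Om N).
HB.instance Definition _ N := isPointed.Build (Om N) [ffun => false].
HB.instance Definition _ N := @isMeasurable.Build default_measure_display (Om N)
  discrete_measurable discrete_measurable0 discrete_measurableC discrete_measurableU.
Lemma Om_meas N (A : set (Om N)) : measurable A. Proof. by []. Qed.
Lemma Om_mfun N d (T : measurableType d) (f : Om N -> T) : measurable_fun setT f.
Proof. by []. Qed.

Section Pmeas.
Variables (R : realType) (N : nat) (q : R).
Hypothesis hq : 0 <= q <= 1.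

Definition p1 (t : bool) : R := if t then q else 1 - q.
Lemma p1_ge0 t : 0 <= p1 t.
Proof. by case/andP: hq => h0 h1; case: t => //=; rewrite subr_ge0. Qed.
Definition pw (w : Om N) : R := \prod_i p1 (w i).
Lemma pw_ge0 w : 0 <= pw w.
Proof. by apply: prodr_ge0 => i _; exact: p1_ge0. Qed.
Definition pnn (w : Om N) : {nonneg R} := NngNum (pw_ge0 w).

Lemma p1_sum : \sum_t p1 t = 1.
Proof. by rewrite big_bool /= addrC subrK. Qed.

Lemma prodL (h : 'I_N -> bool -> R) :
  \sum_(w : Om N) pw w * \prod_i h i (w i) = \prod_i \sum_t p1 t * h i t.
Proof.
rewrite bigA_distr_bigA /=; apply: eq_bigr => w _.
by rewrite /pw -big_split.
Qed.

Definition Pm (A : set (Om N)) : \bar R := (\sum_(w : Om N) mscale (pnn w) \d_w A)%E.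

Let Pm0 : Pm set0 = 0%E.
Proof. by rewrite /Pm big1 // => w _; rewrite measure0. Qed.
Let Pm_ge0 A : (0 <= Pm A)%E.
Proof. by rewrite /Pm; apply: sume_ge0 => w _; exact: measure_ge0. Qed.
Let Pm_sa : semi_sigma_additive Pm.
Proof.
move=> F mF tF mUF; rewrite [X in _ --> X](_ : _ =
    lim ((fun n => \sum_(0 <= i < n) Pm (F i))%E @ \oo)).
  by apply: is_cvg_ereal_nneg_natsum => k _; exact: Pm_ge0.
rewrite /Pm nneseries_sum; last by move=> w j _; exact: measure_ge0.
apply: eq_bigr => /= w _.
exact: measure_semi_bigcup.
Qed.

HB.instance Definition _ := isMeasure.Build _ _ _ Pm Pm0 Pm_ge0 Pm_sa.

Lemma PmE A : Pm A = (\sum_(w : Om N) pw w * (w \in A)%:R)%:E.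
Proof.
rewrite /Pm -sumEFin; apply: eq_bigr => w _.
by rewrite /mscale /= diracE.
Qed.

Lemma sum_pw : \sum_(w : Om N) pw w = 1.
Proof.
transitivity (\sum_(w : Om N) pw w * \prod_(i < N) (fun _ _ => 1 : R) i (w i)).
  by apply: eq_bigr => w _; rewrite big1_eq mulr1.
rewrite (prodL (fun _ _ => 1)) big1 // => i _.
by under eq_bigr do rewrite mulr1; exact: p1_sum.
Qed.

Lemma Pm_setT : Pm setT = 1%E.
Proof.
by rewrite PmE (eq_bigr pw) ?sum_pw // => w _; rewrite in_setT mulr1.
Qed.

HB.instance Definition _ := Measure_isProbability.Build _ _ _ Pm Pm_setT.

End Pmeas.

Lemma indic_bigcap (R : realType) (T : Type) (N : nat) (X : 'I_N -> set T) (w : T) :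
  (w \in \bigcap_(i in [set: 'I_N]) X i)%:R = \prod_i (w \in X i)%:R :> R.
Proof.
case: (pselect (forall i, X i w)) => [h|].
  rewrite mem_set; last by move=> i _; exact: h.
  by rewrite big1 // => i _; rewrite mem_set.
move=> /existsNP [i hi].
rewrite memNset; last by move=> /(_ i I).
by rewrite (bigD1 i) //= memNset // mul0r.
Qed.

Section Indep.
Variables (R : realType) (N : nat) (q : R).
Hypothesis hq : 0 <= q <= 1.

Lemma marg (i : 'I_N) (g : bool -> R) :
  \sum_(w : Om N) pw q w * g (w i) = \sum_t p1 q t * g t.
Proof.
transitivity (\sum_(w : Om N) pw q w *
   \prod_(j < N) (fun j t => if j == i then g t else 1) j (w j)).
  apply: eq_bigr => w _; congr (_ * _).
  by rewrite (bigD1 i) //= eqxx [X in _ * X]big1 ?mulr1 // => j /negbTE ->.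
rewrite (prodL q (fun j t => if j == i then g t else 1)) (bigD1 i) //= eqxx [X in _ * X]big1 ?mulr1 // => j /negbTE ->.
by under eq_bigr do rewrite mulr1; exact: p1_sum.
Qed.

Lemma Pm_indep (T : Type) (a b : T) (B : 'I_N -> set T) :
  Pm hq (\bigcap_(i in [set: 'I_N]) ((fun w : Om N => if w i then b else a) @^-1` B i)) =
  (\big[*%E/1%E]_(i < N) Pm hq ((fun w : Om N => if w i then b else a) @^-1` B i))%E.
Proof.
rewrite PmE.
under eq_bigr do rewrite indic_bigcap.
rewrite (prodL q (fun i t => ((if t then b else a) \in B i)%:R)).
under [RHS]eq_bigr do rewrite PmE.
rewrite prodEFin; congr (_%:E); apply: eq_bigr => i _.
by rewrite (marg i (fun t => ((if t then b else a) \in B i)%:R)).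
Qed.

Lemma Pm_pre (T : Type) (a b : T) (i : 'I_N) (B : set T) :
  Pm hq ((fun w : Om N => if w i then b else a) @^-1` B) =
  ((1 - q) * (a \in B)%:R + q * (b \in B)%:R)%:E.
Proof.
rewrite PmE (marg i (fun t => ((if t then b else a) \in B)%:R)).
by rewrite big_bool /= addrC.
Qed.

Lemma markov (eps : R) (heps : 0 < eps) (hqe : q = eps / 2) :
  1 / 2 <= \sum_(w : Om N) pw q w *
     (w \in [set w : Om N | \sum_i ((w i)%:R : R) <= eps * N%:R])%:R.
Proof.
set G := [set w : Om N | _].
have hs : \sum_(w : Om N) pw q w * (w \in G)%:R +
          \sum_(w : Om N) pw q w * (w \notin G)%:R = 1.
  rewrite -big_split /= -[RHS](sum_pw N q); apply: eq_bigr => w _.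
  by case: (w \in G) => /=; rewrite ?mulr1 ?mulr0 ?addr0 ?add0r.
have hb : \sum_(w : Om N) pw q w * (w \notin G)%:R <=
          \sum_(w : Om N) pw q w * ((\sum_i ((w i)%:R : R)) / (eps * N%:R)).
  apply: ler_sum => w _; apply: ler_wpM2l; first exact: pw_ge0.
  have c0 : 0 <= \sum_i ((w i)%:R : R) by apply: sumr_ge0 => i _; exact: ler0n.
  case: (boolP (w \in G)) => hw /=.
    by apply: divr_ge0 => //; apply: mulr_ge0; [exact: ltW|exact: ler0n].
  have hw' : eps * N%:R < \sum_i ((w i)%:R : R).
    by rewrite ltNge; apply: contra hw => h; rewrite inE.
  have [N0|Npos] := posnP N.
    move: hw'; rewrite big1 ?N0 ?mulr0 ?ltxx // => i _.
    by have := ltn_ord i; rewrite [in X in (_ < X)%N -> _]N0.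
  have eN : 0 < eps * N%:R by apply: mulr_gt0 => //; rewrite ltr0n.
  by rewrite ler_pdivlMr // mul1r ltW.
have hc : \sum_(w : Om N) pw q w * ((\sum_i ((w i)%:R : R)) / (eps * N%:R)) =
          (q *+ N) / (eps * N%:R).
  under eq_bigr do rewrite mulrA.
  rewrite -mulr_suml; congr (_ * _).
  under eq_bigr do rewrite mulr_sumr.
  rewrite exchange_big /=.
  rewrite (eq_bigr (fun _ => q)); first by rewrite sumr_const card_ord.
  move=> i _; rewrite (marg i (fun t => (t%:R : R))).
  by rewrite big_bool /= mulr1 mulr0 addr0.
have hd : (q *+ N) / (eps * N%:R) <= 1 / 2.
  have [N0|Npos] := posnP N; first by rewrite N0 mulr0n mul0r; lra.
  rewrite hqe -[_ *+ N]mulr_natr; have eN : 0 < N%:R :> R by rewrite ltr0n.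
  have e0 : eps != 0 by rewrite gt_eqF.
  have n0 : N%:R != 0 :> R by rewrite gt_eqF.
  rewrite (_ : _ / _ = 1 / 2) //; field.
  by rewrite n0 e0.
lra.
Qed.

End Indep.

Section Qsec.
Variables (d : measure_display) (T : measurableType d) (R : realType).

Lemma int_msd (r : {nonneg R}) (c : T) (f : T -> R) : measurable_fun setT f ->
  (\int[mscale r (@dirac _ T c R)]_x (f x)%:E = (r%:num * f c)%:E)%E.
Proof.
move=> mf.
have mfE : measurable_fun setT (fun x => (f x)%:E) by exact/measurable_EFinP.
rewrite integralE !ge0_integral_mscale //; try exact: measurable_funeneg;
  try exact: measurable_funepos; try (by move=> x _; exact: funeneg_ge0);
  try (by move=> x _; exact: funepos_ge0).
rewrite !integral_dirac //; try exact: measurable_funeneg;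
  try exact: measurable_funepos.
rewrite diracT !mul1e funeposE funenegE.
rewrite -EFin_max -EFinN -EFin_max -!EFinM -EFinB; congr (_%:E).
rewrite -mulrBr; congr (_ * _).
by have [h|h] := leP 0 (f c); have [h2|h2] := leP (- f c) 0; lra.
Qed.

Lemma mabsE (f : T -> R) : measurable_fun setT f ->
  measurable_fun setT (fun x => `|(f x)%:E|%E).
Proof.
move=> mf; have mf' : measurable_fun setT (EFin \o f) by exact/measurable_EFinP.
exact: (measurableT_comp (@abse_measurable _ setT) mf').
Qed.

Lemma intb_msd (r : {nonneg R}) (c : T) (f : T -> R) : measurable_fun setT f ->
  (mscale r (@dirac _ T c R)).-integrable setT (fun x => (f x)%:E).
Proof.
move=> mf; apply/integrableP; split; first exact/measurable_EFinP.
rewrite ge0_integral_mscale //; try exact: mabsE.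
rewrite integral_dirac ?diracT ?mul1e //; last exact: mabsE.
by rewrite -EFinM ltry.
Qed.

Variables (q : R) (hq : 0 <= q <= 1) (a b : T).

Lemma nq1_ge0 : 0 <= 1 - q. Proof. by case/andP: hq => _ h; rewrite subr_ge0. Qed.
Lemma nq_ge0 : 0 <= q. Proof. by case/andP: hq. Qed.
Definition Qm := measure_add (mscale (NngNum nq1_ge0) (@dirac _ T a R))
                             (mscale (NngNum nq_ge0) (@dirac _ T b R)).

Lemma Qm_setT : Qm setT = 1%E.
Proof.
by rewrite /Qm measure_addE; rewrite /reverse_coercion /= /mscale /= !diracT !mule1 -EFinD subrK.
Qed.

Lemma QmE A : Qm A = ((1 - q) * (a \in A)%:R + q * (b \in A)%:R)%:E.
Proof.
by rewrite /Qm measure_addE; rewrite /reverse_coercion /= /mscale /= !diracE.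
Qed.

HB.instance Definition _ := Measure.on Qm.
HB.instance Definition _ := Measure_isProbability.Build _ _ _ Qm Qm_setT.

Lemma Qm_int (f : T -> R) : measurable_fun setT f ->
  (\int[Qm]_x (f x)%:E = ((1 - q) * f a + q * f b)%:E)%E.
Proof.
move=> mf; rewrite /Qm integral_measure_add //; try exact: intb_msd;
  try exact/measurable_EFinP.
by rewrite !int_msd.
Qed.

Lemma Qm_intb (f : T -> R) : measurable_fun setT f ->
  Qm.-integrable setT (fun x => (f x)%:E).
Proof.
move=> mf; apply/integrableP; split; first exact/measurable_EFinP.
rewrite /Qm ge0_integral_measure_add //; last exact: mabsE.
rewrite !ge0_integral_mscale //; try exact: mabsE.
rewrite !integral_dirac ?diracT ?mul1e //; try exact: mabsE.
by rewrite -!EFinM -EFinD ltry.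
Qed.

End Qsec.

Section Vec.
Variable R : realType.

Lemma CS n (u a : 'I_n -> R) :
  (\sum_i u i * a i) ^+ 2 <= (\sum_i u i ^+ 2) * (\sum_i a i ^+ 2).
Proof.
have H : 0 <= \sum_i \sum_j (u i * a j - u j * a i) ^+ 2.
  by apply: sumr_ge0 => i _; apply: sumr_ge0 => j _; exact: sqr_ge0.
have E : \sum_i \sum_j (u i * a j - u j * a i) ^+ 2 =
    \sum_i \sum_j (u i ^+ 2 * a j ^+ 2) + \sum_i \sum_j (u j ^+ 2 * a i ^+ 2)
    - 2 * \sum_i \sum_j ((u i * a i) * (u j * a j)).
  rewrite mulr_sumr -big_split -sumrB /=; apply: eq_bigr => i _.
  rewrite mulr_sumr -big_split -sumrB /=; apply: eq_bigr => j _.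
  by rewrite sqrrB !exprMn; ring.
have E2 : \sum_i \sum_j (u j ^+ 2 * a i ^+ 2) = \sum_i \sum_j (u i ^+ 2 * a j ^+ 2).
  by rewrite exchange_big.
have E3 : \sum_i \sum_j (u i ^+ 2 * a j ^+ 2) = (\sum_i u i ^+ 2) * (\sum_i a i ^+ 2).
  by rewrite mulr_suml; apply: eq_bigr => i _; rewrite mulr_sumr.
have E4 : \sum_i \sum_j ((u i * a i) * (u j * a j)) = (\sum_i u i * a i) ^+ 2.
  by rewrite expr2 mulr_suml; apply: eq_bigr => i _; rewrite mulr_sumr.
rewrite E E2 E3 E4 in H; lra.
Qed.

Lemma sqnorm_ge0 n (x : n.-tuple R) : 0 <= sqnorm x.
Proof. by apply: sumr_ge0 => i _; exact: sqr_ge0. Qed.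

Lemma sqnorm_sym n (x y : n.-tuple R) : sqnorm (vsub x y) = sqnorm (vsub y x).
Proof.
by apply: eq_bigr => i _; rewrite !tnth_mktuple -sqrrN opprB.
Qed.

Lemma sqnorm_tri n (x y z : n.-tuple R) :
  sqnorm (vsub x y) <= 2 * sqnorm (vsub x z) + 2 * sqnorm (vsub y z).
Proof.
rewrite /sqnorm !mulr_sumr -big_split /=; apply: ler_sum => i _.
rewrite !tnth_mktuple.
have h : 0 <= (tnth x i - tnth z i + (tnth y i - tnth z i)) ^+ 2 by exact: sqr_ge0.
rewrite !sqrrB !sqrrD in h *; nra.
Qed.

Lemma enorm_sq n (x : n.-tuple R) : enorm x ^+ 2 = sqnorm x.
Proof. by rewrite /enorm sqr_sqrtr // sqnorm_ge0. Qed.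

Lemma enorm_ge0 n (x : n.-tuple R) : 0 <= enorm x.
Proof. exact: sqrtr_ge0. Qed.

Lemma vadd_vsub n (x y : n.-tuple R) : vadd y (vsub x y) = x.
Proof. by apply: eq_from_tnth => i; rewrite !tnth_mktuple addrC subrK. Qed.

Lemma sqnorm0 n (x : n.-tuple R) : sqnorm (vsub x x) = 0.
Proof. by rewrite /sqnorm big1 // => i _; rewrite tnth_mktuple subrr expr0n. Qed.

End Vec.

Section Model.
Variables (R : realType) (n N : nat) (K : set (n.-tuple R)) (s2 eps : R)
  (muhat : N.-tuple (n.-tuple R) -> n.-tuple R).
Hypotheses (heps : 0 < eps < 2^-1) (hs2 : 0 <= s2).
Variables (mu0 mu : n.-tuple R).
Hypotheses (Kmu : K mu) (hv : sqnorm (vsub mu mu0) <= eps / 2 * s2).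

Let q := eps / 2.
Let hq : 0 <= q <= 1.
Proof. by case/andP: heps => h1 h2; apply/andP; split; rewrite /q; lra. Qed.
Let q0 : 0 < q. Proof. by case/andP: heps => h1 h2; rewrite /q; lra. Qed.
Let a := vsub mu0 mu.
Let b := [tuple (1 - q^-1) * tnth a j | j < n].
Let xi (i : 'I_N) (w : Om N) : n.-tuple R := if w i then b else a.
Let T0 := [tuple mu0 | _ < N].
Let C (x : N.-tuple (n.-tuple R)) :=
  if (#|[set i | tnth x i != mu0]|)%:R <= eps * N%:R then T0 else x.

Let Q := Qm (T := n.-tuple R) hq a b.

Let mean0 : mean_vec Q = 0.
Proof.
apply/rowP => j; rewrite !mxE Qm_int; last exact: measurable_tnth.
rewrite /= !tnth_mktuple.
have qn0 : q != 0 by rewrite gt_eqF.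
by field.
Qed.

Lemma XiQ : Xi_class s2 Q.
Proof.
split; first by move=> j; apply: Qm_intb; exact: measurable_tnth.
split.
  move=> j; apply: Qm_intb; apply: measurable_funX; exact: measurable_tnth.
split; first exact: mean0.
move=> u.
have qn0 : q != 0 by rewrite gt_eqF.
have cov : forall j k, cov_mx Q j k = (1 - q) / q * (tnth a j * tnth a k).
  move=> j k; rewrite /cov_mx mxE mean0 !mxE.
  rewrite Qm_int /=; last first.
    exact: measurable_funM (measurable_funB (measurable_tnth j) (measurable_cst _))
       (measurable_funB (measurable_tnth k) (measurable_cst _)).
  by rewrite !tnth_mktuple /= !subr0; field.
rewrite !mxE.
under eq_bigr => k _ do rewrite !mxE.
rewrite mul_mx_scalar.
under [X in _ <= X]eq_bigr => k _ do rewrite !mxE.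
under eq_bigr => k _ do under eq_bigr => j _ do rewrite cov.
set c0 := (1 - q) / q.
set S := \sum_j u 0 j * tnth a j.
set U := \sum_j u 0 j ^+ 2.
set A2 := \sum_j tnth a j ^+ 2.
have hL : \sum_k (\sum_j u 0 j * (c0 * (tnth a j * tnth a k))) * u 0 k = c0 * S ^+ 2.
  rewrite expr2 mulrA mulr_sumr; apply: eq_bigr => k _.
  have -> : \sum_j u 0 j * (c0 * (tnth a j * tnth a k)) = c0 * tnth a k * S.
    by rewrite /S mulr_sumr; apply: eq_bigr => j _; ring.
  ring.
have hR : \sum_k s2 * u 0 k * u 0 k = s2 * U.
  by rewrite /U mulr_sumr; apply: eq_bigr => k _; ring.
rewrite hL hR.
have hA : A2 <= q * s2.
  have -> : A2 = sqnorm a by [].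
  by rewrite /a sqnorm_sym.
have c0ge : 0 <= c0.
  by rewrite /c0; apply: divr_ge0; [case/andP: hq => _ h; rewrite subr_ge0|exact: ltW].
have h1 : c0 * A2 <= s2.
  apply: (le_trans (ler_wpM2l c0ge hA)).
  rewrite (_ : c0 * (q * s2) = (1 - q) * s2); last by rewrite /c0; field.
  by rewrite mulrBl mul1r gerBl; apply: mulr_ge0 => //; exact: ltW.
have hCS : S ^+ 2 <= U * A2 := CS (fun j => u 0 j) (fun j => tnth a j).
have U0 : 0 <= U by apply: sumr_ge0 => j _; exact: sqr_ge0.
apply: (le_trans (ler_wpM2l c0ge hCS)).
rewrite mulrCA [U * _]mulrC; exact: (ler_wpM2r U0 h1).
Qed.

Lemma advC : adversary eps C.
Proof.
move=> x; rewrite /C; case: ifP => h.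
  apply: le_trans h; rewrite ler_nat.
  rewrite -!sum1_card big_mkcond [X in (_ <= X)%N]big_mkcond.
  apply: leq_sum => i _; case: ifPn => // /set_mem /= fi.
  by rewrite mem_set //= -(tnth_mktuple (fun _ => mu0) i) eq_sym.
rewrite (_ : #|_| = 0%N).
  by apply: mulr_ge0; [case/andP: heps => h1 _; exact: ltW|exact: ler0n].
by apply: eq_card0 => i; apply/negP => /set_mem /=; rewrite eqxx.
Qed.

Let G := [set w : Om N | \sum_i ((w i)%:R : R) <= eps * N%:R].

Let keyG w : G w -> C [tuple vadd mu (xi i w) | i < N] = T0.
Proof.
move=> Gw; rewrite /C ifT //; apply: le_trans Gw.
rewrite -sum1_card natr_sum big_mkcond /=; apply: ler_sum => i _.
case: ifPn => [/set_mem /=|_]; last by case: (w i).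
rewrite tnth_mktuple /xi; case: (w i) => //=.
by rewrite /a vadd_vsub eqxx.
Qed.

Lemma model : exists r : \bar R, attainable_risks K s2 eps muhat r /\ ((2^-1 * sqnorm (vsub (muhat T0) mu))%:E <= r)%E.
Proof.
exists (\int[Pm hq]_w (sqnorm (vsub (muhat (C [tuple vadd mu (xi i w) | i < N])) mu))%:E)%E.
split.
  exists mu; split => //.
  exists default_measure_display, (Om N), (Pm hq), xi, Q.
  split; first exact: XiQ.
  split; first by move=> i; exact: Om_mfun.
  split.
    move=> i B mB; transitivity (((1 - q) * (a \in B)%:R + q * (b \in B)%:R)%:E).
      exact: Pm_pre.
    exact: (esym (QmE hq a b B)).
  split.
    by move=> B mB; exact: Pm_indep.
  by exists C; split; [exact: advC|].
set c := sqnorm (vsub (muhat T0) mu).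
have c0 : 0 <= c := sqnorm_ge0 _.
apply: (@le_trans _ _ (\int[Pm hq]_w (c%:E * (\1_G w)%:E))%E).
  rewrite ge0_integralZl //; try exact: Om_mfun;
    try (by move=> w _; rewrite lee_fin); try (by rewrite lee_fin).
  rewrite integral_indic // setIT -[X in (_ * X)%E]/(Pm hq G) PmE -EFinM lee_fin.
  have heps' : 0 < eps by case/andP: heps.
  have := markov N hq heps' erefl.
  rewrite -/G => h.
  rewrite mulrC; apply: ler_wpM2l => //; by rewrite -[2^-1]mul1r.
apply: ge0_le_integral => //; try exact: Om_mfun.
  by move=> w _; apply: mule_ge0; rewrite lee_fin.
move=> w _; case: (pselect (G w)) => Gw.
  by rewrite indicE mem_set // mule1 keyG.
by rewrite indicE memNset // mule0 lee_fin sqnorm_ge0.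
Qed.

End Model.

Lemma sqnorm_bound (R : realType) n (x y : n.-tuple R) M :
  enorm x <= M -> enorm y <= M -> enorm (vsub x y) <= 2 * M.
Proof.
move=> hx hy.
pose z := [tuple (0 : R) | _ < n].
have hz : forall w : n.-tuple R, sqnorm (vsub w z) = sqnorm w.
  by move=> w; apply: eq_bigr => i _; rewrite !tnth_mktuple subr0.
have h := sqnorm_tri x y z; rewrite !hz in h.
have ex := enorm_ge0 x; have ey := enorm_ge0 y; have exy := enorm_ge0 (vsub x y).
rewrite -!enorm_sq in h.
nra.
Qed.

Lemma step1 (R : realType) n (K : set (n.-tuple R)) ks :
  bounded_tset K -> K ks ->
  exists k, K k /\ tdiam K ^+ 2 / 16 <= sqnorm (vsub k ks) /\ 0 <= tdiam K.
Proof.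
move=> [M hM] Kks.
set S := [set r | exists x y, K x /\ K y /\ r = enorm (vsub x y)].
have S0 : S 0 by exists ks, ks; split => //; split => //; rewrite /enorm sqnorm0 sqrtr0.
have hsup : has_sup S.
  split; first by exists 0.
  exists (2 * M) => r [x [y [Kx [Ky ->]]]].
  exact: sqnorm_bound (hM _ Kx) (hM _ Ky).
have d0 : 0 <= tdiam K := sup_upper_bound hsup S0.
have [dpos|dle] := ltrP 0 (tdiam K); last first.
  exists ks; split => //; split => //.
  have -> : tdiam K = 0 by apply/eqP; rewrite eq_le dle d0.
  by rewrite expr0n /= mul0r sqnorm_ge0.
have hd2 : 0 < tdiam K / 2 by lra.
have [r [x [y [Kx [Ky ->]]]] hr] := sup_adherent hd2 hsup.
have hr2 : tdiam K - tdiam K / 2 < enorm (vsub x y) := hr.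
clear hr; rename hr2 into hr.
have hxy := sqnorm_tri x y ks.
have e0 := enorm_ge0 (vsub x y).
have hsq : tdiam K ^+ 2 / 4 <= sqnorm (vsub x y).
  rewrite -enorm_sq; set e := enorm _ in hr e0 *; set D := tdiam K in hr dpos *.
  have : D / 2 <= e by lra.
  move=> h; nra.
have [h|h] := leP (tdiam K ^+ 2 / 16) (sqnorm (vsub x ks)).
  by exists x.
exists y; split => //; split => //; lra.
Qed.

Theorem mainTheorem4 :
  exists a : rat, 0 < a /\
  forall (R : realType) (n N : nat) (K : set (n.-tuple R)) (sigma eps : R),
    bounded_tset K -> star_shaped_tset K -> 0 < sigma -> 0 < eps < 2^-1 ->
    ((ratr a * Order.min (eps * sigma ^+ 2) (tdiam K ^+ 2))%:E
       <= minimax_risk N K (sigma ^+ 2) eps)%E.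
Proof.
exists (128%:Q)^-1; split; first by rewrite invr_gt0.
move=> R n N K sigma eps hb [ks [Kks hstar]] sig0 heps.
have hs2 : 0 <= sigma ^+ 2 := sqr_ge0 _.
have [k [Kk [hk d0]]] := step1 hb Kks.
have e0 : 0 < eps by case/andP: heps.
set s2 := sigma ^+ 2 in hs2 *.
set d := tdiam K in hk d0 *.
set q := eps / 2.
have q0 : 0 < q by rewrite /q; lra.
set R2 := sqnorm (vsub k ks).
have R20 : 0 <= R2 := sqnorm_ge0 _.
set t2 := Num.min 1 (q * s2 / R2).
have t2ge : 0 <= t2.
  rewrite /t2 le_min ler01 /=; apply: divr_ge0 => //; apply: mulr_ge0 => //; exact: ltW.
have t2le : t2 <= 1 by rewrite /t2 ge_min lexx.
set t := Num.sqrt t2.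
have tge : 0 <= t := sqrtr_ge0 _.
have tt : t ^+ 2 = t2 := sqr_sqrtr t2ge.
have tle : t <= 1 by nra.
set mu1 := vadd [tuple (1 - t) * tnth ks j | j < n] [tuple t * tnth k j | j < n].
have Kmu1 : K mu1 by apply: hstar => //; rewrite tge tle.
have hv1 : sqnorm (vsub mu1 ks) = t2 * R2.
  rewrite /R2 /sqnorm mulr_sumr; apply: eq_bigr => j _; rewrite !tnth_mktuple -tt; ring.
have hD1 : t2 * R2 <= eps / 2 * s2.
  rewrite /t2; have [R2z|R2p] := eqVneq R2 0.
    by rewrite R2z mulr0; apply: mulr_ge0 => //; lra.
  have R2pos : 0 < R2 by rewrite lt_neqAle eq_sym R2p R20.
  have [h|h] := leP 1 (q * s2 / R2).
    by rewrite ler_pdivlMr // mul1r in h; rewrite mul1r -/q.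
  by rewrite divfK.
have hD2 : d ^+ 2 / 16 <= t2 * R2 \/ q * s2 <= t2 * R2.
  rewrite /t2; have [R2z|R2p] := eqVneq R2 0.
    by left; rewrite R2z mulr0; rewrite -/R2 R2z in hk.
  have [h|h] := leP 1 (q * s2 / R2); first by left; rewrite mul1r.
  by right; rewrite divfK.
apply: le_ereal_inf_tmp => _ [muhat _ <-].
have hv0 : sqnorm (vsub ks ks) <= eps / 2 * s2.
  by rewrite sqnorm0; apply: mulr_ge0 => //; lra.
have hv1' : sqnorm (vsub mu1 ks) <= eps / 2 * s2 by rewrite hv1.
have [r0 [A0 h0]] := @model R n N K s2 eps muhat heps hs2 ks ks Kks hv0.
have [r1 [A1 h1]] := @model R n N K s2 eps muhat heps hs2 ks mu1 Kmu1 hv1'.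
have w0 : (r0 <= worst_risk K s2 eps muhat)%E := ereal_sup_ubound A0.
have w1 : (r1 <= worst_risk K s2 eps muhat)%E := ereal_sup_ubound A1.
set c := muhat [tuple ks | _ < N] in h0 h1.
set A := sqnorm (vsub c ks) in h0.
set B := sqnorm (vsub c mu1) in h1.
have tri : t2 * R2 <= 2 * A + 2 * B.
  rewrite -hv1 /A /B (sqnorm_sym c ks) (sqnorm_sym c mu1) addrC.
  exact: sqnorm_tri.
have -> : ratr (128%:Q)^-1 = 128^-1 :> R.
  by rewrite fmorphV rmorph_int.
set mn := Order.min (eps * s2) (d ^+ 2).
have mn1 : mn <= eps * s2 by rewrite /mn ge_min lexx.
have mn2 : mn <= d ^+ 2 by rewrite /mn ge_min lexx orbT.
have A0' : 0 <= A := sqnorm_ge0 _.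
have B0' : 0 <= B := sqnorm_ge0 _.
have [hA|hB] : 128^-1 * mn <= 2^-1 * A \/ 128^-1 * mn <= 2^-1 * B.
  case: hD2 => hD2; rewrite /q in hD2; case: (leP B A) => hAB.
  - by left; lra.
  - by right; lra.
  - by left; lra.
  - by right; lra.
- by apply: le_trans w0; apply: le_trans h0; rewrite lee_fin.
- by apply: le_trans w1; apply: le_trans h1; rewrite lee_fin.
Qed.
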